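(* Let $S\subset\mathbb{R}^d$ be a nonempty compact convex set with diameter $D:=\sup_{x,y\in S}\|x-y\|$, and let $f$ be differentiable on $S$ with $L$-Lipschitz gradient on $S$. Let $G:=\sup_{x\in S}\|\nabla f(x)\|<\infty$ and fix a constant $C\ge\max\{LD^2,\,GD\}$ (with $C>0$). Let $\delta\ge 0$, and suppose that for every $x\in S$ a vector $g_\delta(x)\in\mathbb{R}^d$ is available with \[ \big|\langle \nabla f(x)-g_\delta(x),\,s-x\rangle\big|\le\delta\quad\text{for all } s\in S. \] Given $x^0\in S$, define iterates for $k=0,1,2,\dots$ by choosing $s^k\in\arg\min_{s\in S}\langle g_\delta(x^k),\,s-x^k\rangle$, setting $\tilde g_k:=\langle g_\delta(x^k),\,x^k-s^k\rangle$, $\overline\alpha_k:=(\tilde g_k-\delta)_+/C$ where $(u)_+:=\max\{u,0\}$, and $x^{k+1}:=x^k+\overline\alpha_k(s^k-x^k)$. Then for every $k\ge 0$, \[ f(x^{k+1})\le f(x^k)-\frac{(\tilde g_k-\delta)_+^2}{2C}. \]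
   Context: $\|\cdot\|$ is the Euclidean norm and $\langle\cdot,\cdot\rangle$ the Euclidean inner product. $f$ need not be convex. *)

(* Defs.v *)
From HB Require Import structures.
From mathcomp Require Import all_boot all_order all_algebra.
From mathcomp Require Import all_classical all_reals all_analysis.
Set Implicit Arguments. Unset Strict Implicit. Unset Printing Implicit Defensive.
Import Order.TTheory GRing.Theory Num.Theory.
Import numFieldNormedType.Exports.
Local Open Scope classical_set_scope.
Local Open Scope ring_scope.

Section Defs.
Variables (R : realType) (d : nat).

Definition dotp (u v : 'rV[R]_d) : R := \sum_(i < d) u ord0 i * v ord0 i.
Definition enorm (u : 'rV[R]_d) : R := Num.sqrt (dotp u u).

Definition convexS (S : set 'rV[R]_d) : Prop :=
  forall x y (t : R), S x -> S y -> 0 <= t -> t <= 1 -> S (x + t *: (y - x)).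

Definition gradient (f : 'rV[R]_d -> R) (x : 'rV[R]_d) : 'rV[R]_d :=
  \row_(i < d) ('d f x : 'rV[R]_d -> R) (delta_mx ord0 i).

Definition diam (S : set 'rV[R]_d) : R :=
  sup [set r | exists x y, S x /\ S y /\ r = enorm (x - y)].

Definition gradsup (f : 'rV[R]_d -> R) (S : set 'rV[R]_d) : R :=
  sup [set r | exists x, S x /\ r = enorm (gradient f x)].

Definition pos_part (u : R) : R := Num.max u 0.

End Defs.

(* Main.v *)
Require Import Defs.
From HB Require Import structures.
From mathcomp Require Import all_boot all_order all_algebra.
From mathcomp Require Import all_classical all_reals all_analysis.
From mathcomp Require Import ring lra.
Import Order.TTheory GRing.Theory Num.Theory.
Import numFieldNormedType.Exports.
Local Open Scope classical_set_scope.
Local Open Scope ring_scope.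
Set Implicit Arguments. Unset Strict Implicit.
Section T.
Variables (R : realType) (d : nat).
Implicit Types u v w : 'rV[R]_d.
Lemma entry_le (u : 'rV[R]_d) i : `|u ord0 i| <= `|u|.
Proof.
rewrite [X in _ <= X]/Num.norm /= mx_normrE.
apply: le_trans (le_bigmax _ _ (ord0, i)) => //=.
Qed.
Local Notation dotp := (@dotp R d).
Local Notation enorm := (@enorm R d).

Lemma dotpC u v : dotp u v = dotp v u.
Proof. by apply: eq_bigr => i _; rewrite mulrC. Qed.
Lemma dotpDl u v w : dotp (u + v) w = dotp u w + dotp v w.
Proof. by rewrite /dotp -big_split; apply: eq_bigr => i _; rewrite mxE mulrDl. Qed.
Lemma dotpZl (t : R) u w : dotp (t *: u) w = t * dotp u w.
Proof. by rewrite /dotp mulr_sumr; apply: eq_bigr => i _; rewrite mxE mulrA. Qed.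
Lemma dotpNl u w : dotp (- u) w = - dotp u w.
Proof. by rewrite -scaleN1r dotpZl mulN1r. Qed.
Lemma dotpBl u v w : dotp (u - v) w = dotp u w - dotp v w.
Proof. by rewrite dotpDl dotpNl. Qed.
Lemma dotpDr u v w : dotp w (u + v) = dotp w u + dotp w v.
Proof. by rewrite !(dotpC w) dotpDl. Qed.
Lemma dotpZr (t : R) u w : dotp w (t *: u) = t * dotp w u.
Proof. by rewrite !(dotpC w) dotpZl. Qed.
Lemma dotpNr u w : dotp w (- u) = - dotp w u.
Proof. by rewrite !(dotpC w) dotpNl. Qed.
Lemma dotpBr u v w : dotp w (u - v) = dotp w u - dotp w v.
Proof. by rewrite !(dotpC w) dotpBl. Qed.
Lemma dotp_ge0 u : 0 <= dotp u u.
Proof. by apply: sumr_ge0 => i _; rewrite -expr2 sqr_ge0. Qed.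
Lemma dotp_eq0 u : dotp u u = 0 -> u = 0.
Proof.
move=> /eqP; rewrite psumr_eq0; last by move=> i _; rewrite -expr2 sqr_ge0.
move=> /allP H; apply/rowP => i; rewrite mxE.
have := H i (mem_index_enum _); rewrite /= mulf_eq0 orbb => /eqP //.
Qed.
Lemma dotp0l u : dotp 0 u = 0.
Proof. by rewrite /dotp big1 // => i _; rewrite mxE mul0r. Qed.
Lemma dotp0r u : dotp u 0 = 0.
Proof. by rewrite dotpC dotp0l. Qed.
Lemma enorm_ge0 u : 0 <= enorm u.
Proof. exact: sqrtr_ge0. Qed.
Lemma enorm_sq u : enorm u ^+ 2 = dotp u u.
Proof. by rewrite sqr_sqrtr // dotp_ge0. Qed.
Lemma enorm0 u : enorm u = 0 -> u = 0.
Proof. by move=> h; apply: dotp_eq0; rewrite -enorm_sq h expr0n. Qed.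

Lemma cauchy_schwarz u v : dotp u v <= enorm u * enorm v.
Proof.
set a := enorm u; set b := enorm v.
have ha : 0 <= a := enorm_ge0 u. have hb : 0 <= b := enorm_ge0 v.
have hq := dotp_ge0 (b *: u - a *: v).
rewrite !(dotpBl, dotpBr, dotpZl, dotpZr) -!enorm_sq (dotpC v u) -/a -/b in hq.
have [ab0|] := ltrP 0 (a * b).
  have : 0 <= (a * b) * (2 * (a * b - dotp u v)) by nra.
  by rewrite pmulr_rge0 // => h; nra.
move=> ab0; have : a * b = 0 by apply/eqP; rewrite eq_le ab0 mulr_ge0.
move/eqP; rewrite mulf_eq0 => /orP[/eqP/enorm0 ->|/eqP/enorm0 ->].
  by rewrite dotp0l mulr_ge0 // enorm_ge0.
by rewrite dotp0r mulr_ge0 // enorm_ge0.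
Qed.

Lemma enormZ (t : R) u : enorm (t *: u) = `|t| * enorm u.
Proof.
rewrite /enorm dotpZl dotpZr mulrA -expr2 sqrtrM ?sqr_ge0 //.
by rewrite sqrtr_sqr.
Qed.

Lemma enorm_le (M : R) u : 0 <= M -> dotp u u <= M ^+ 2 -> enorm u <= M.
Proof.
move=> hM h; rewrite -(ger0_norm hM) -sqrtr_sqr /enorm.
by rewrite ler_sqrt // sqr_ge0.
Qed.

Lemma enormD u v : enorm (u + v) <= enorm u + enorm v.
Proof.
apply: enorm_le; first by rewrite addr_ge0 // enorm_ge0.
rewrite !(dotpDl, dotpDr) -!enorm_sq (dotpC v u).
have := cauchy_schwarz u v; nra.
Qed.

Lemma enorm_mx u : enorm u <= d%:R * `|u|.
Proof.
apply: enorm_le; first by rewrite mulr_ge0.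
apply: (@le_trans _ _ (\sum_(i < d) `|u|^+2)).
  apply: ler_sum => i _; rewrite -expr2 -real_normK ?num_real //.
  by rewrite lerXn2r ?nnegrE ?normr_ge0 // entry_le.
rewrite sumr_const card_ord exprMn -[_ *+ d]mulr_natl.
apply: ler_wpM2r; first exact: sqr_ge0.
rewrite -natrX ler_nat; case: (d) => // n; rewrite expnS leq_pmulr //.
Qed.
Lemma dgrad (f : 'rV[R]_d -> R) z v : 'd f z v = dotp (gradient f z) v.
Proof.
rewrite {1}(row_sum_delta v) linear_sum /dotp; apply: eq_bigr => i _.
by rewrite linearZ /= mxE mulrC.
Qed.

Lemma phi_derive (f : 'rV[R]_d -> R) x v (t : R) :
  differentiable f (x + t *: v) ->
  is_derive t 1 (fun t => f (x + t *: v)) (dotp (gradient f (x + t *: v)) v).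
Proof.
move=> df.
have dl : differentiable (fun t : R => x + t *: v) t by [].
have dc : differentiable (f \o (fun t : R => x + t *: v)) t.
  exact: differentiable_comp.
apply: DeriveDef; first exact: diff_derivable.
rewrite deriveE // diff_comp //= -dgrad; congr ('d f _ _).
have -> : (fun t : R => x + t *: v) = (cst x) + (fun t : R => t *: v) by [].
have H1 := @is_diff_cst R R 'rV[R]_d x t.
have H2 := @is_diff_scalel R 'rV[R]_d t v.
have H := @is_diffD R R 'rV[R]_d _ _ _ _ t H1 H2.
by rewrite diff_val /= add0r scale1r.
Qed.

Lemma descent (f : 'rV[R]_d -> R) (S : set 'rV[R]_d) (L : R) x y :
  convexS S -> S x -> S y -> (forall z, S z -> differentiable f z) ->
  (forall y z, S y -> S z ->
     enorm (gradient f y - gradient f z) <= L * enorm (y - z)) ->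
  f y <= f x + dotp (gradient f x) (y - x) + L / 2 * enorm (y - x) ^+ 2.
Proof.
move=> cS Sx Sy dS Lip.
set v := y - x; set a := dotp (gradient f x) v; set c := L / 2 * enorm v ^+ 2.
have Sz : forall t : R, 0 <= t -> t <= 1 -> S (x + t *: v).
  by move=> t t0 t1; apply: cS.
pose phi := fun t : R => f (x + t *: v).
pose dphi := fun t : R => dotp (gradient f (x + t *: v)) v.
pose h := phi - a \*: (@id R) - c \*: ((@id R) * (@id R)).
pose dh := fun t : R => dphi t - a *: (1:R) - c *: (t *: (1:R) + t *: (1:R)).
have Hd : forall t : R, 0 <= t -> t <= 1 -> is_derive t 1 h (dh t).
  move=> t t0 t1.
  have Hphi : is_derive t 1 phi (dphi t) by apply: phi_derive; apply: dS; apply: Sz.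
  have H1 := is_deriveZ a (is_derive_id t (1:R)).
  have H2 := is_deriveZ c (is_deriveM (is_derive_id t (1:R)) (is_derive_id t (1:R))).
  exact: (is_deriveB (is_deriveB Hphi H1) H2).
have [k k01 Hk] : exists2 k, k \in `]0, 1[%R & h 1 - h 0 = dh k * (1 - 0).
  apply: MVT => //.
    by move=> t; rewrite in_itv /= => /andP[t0 t1]; apply: Hd; rewrite ltW.
  apply: continuous_in_subspaceT => t; rewrite inE /= in_itv /= => /andP[t0 t1].
  have /derivable1_diffP/differentiable_continuous := @ex_derive _ _ _ _ _ _ _ (Hd t t0 t1).
  done.
have h1 : h 1 = f y - a - c.
  change (f (x + 1 *: v) - a * (1:R) - c * ((1:R) * 1) = f y - a - c).
  by rewrite scale1r /v (addrC x) subrK !mulr1.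
have h0 : h 0 = f x.
  change (f (x + 0 *: v) - a * (0:R) - c * ((0:R) * 0) = f x).
  by rewrite scale0r addr0 !mulr0 !subr0.
  have [k0 k1] : 0 < k /\ k < 1 by move: k01; rewrite in_itv /= => /andP[].
have Szk := Sz k (ltW k0) (ltW k1).
have Lk := Lip _ _ Szk Sx.
have e1 : x + k *: v - x = k *: v by rewrite addrAC subrr add0r.
rewrite e1 enormZ ger0_norm in Lk; last exact: ltW.
have CS := cauchy_schwarz (gradient f (x + k *: v) - gradient f x) v.
have ev0 := enorm_ge0 v.
have Lk2 := @ler_wpM2r R (enorm v) ev0 _ _ Lk.
have dhk : dh k = dotp (gradient f (x + k *: v) - gradient f x) v - L * k * enorm v ^+ 2.
  change (dphi k - a * 1 - c * (k * 1 + k * 1) = dotp (gradient f (x + k *: v) - gradient f x) v - L * k * enorm v ^+ 2).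
  rewrite dotpBl /dphi /a /c !mulr1.
  congr (_ - _).
  have e2 : enorm v ^+ 2 = enorm v ^+ 2 by [].
  move: (enorm v ^+ 2) e2 => e _.
  by field.
have dhk0 : dh k <= 0.
  rewrite dhk; move: CS Lk2; rewrite expr2.
  set G := dotp _ v. set N := enorm (_ - _). set ev := enorm v.
  clearbody G N ev. nra.
rewrite h1 h0 subr0 mulr1 in Hk.
move: Hk dhk0; rewrite -/a -/c.
set z := dh k. clearbody z a c. lra.
Qed.

Lemma cbound (S : set 'rV[R]_d) : compact S -> exists M, 0 <= M /\ forall x, S x -> `|x| <= M.
Proof.
move=> /compact_bounded [M [_ HM]].
exists (`|M| + 1); split; first by rewrite addr_ge0.
move=> x Sx; apply: (HM (`|M|+1)) => //.
by rewrite (le_lt_trans (ler_norm M)) // ltrDl.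
Qed.

Lemma enormN u : enorm (- u) = enorm u.
Proof. by rewrite -scaleN1r enormZ normrN normr1 mul1r. Qed.

Lemma pp_facts (u C : R) : 0 <= pos_part u /\ pos_part u * u = pos_part u ^+ 2 /\
  (u <= C -> 0 <= C -> pos_part u <= C).
Proof.
rewrite /pos_part; have [h|h] := leP 0 u.
  by rewrite expr2; split => //; split.
split => //; split => //; first by rewrite mul0r expr0n.
Qed.
End T.

Unset Implicit Arguments.
Theorem lemma2 (R : realType) (d : nat) (S : set 'rV[R]_d)
  (f : 'rV[R]_d -> R) (L C delta : R) (g : 'rV[R]_d -> 'rV[R]_d)
  (x s : nat -> 'rV[R]_d) :
  S !=set0 -> compact S -> convexS S ->
  (forall z, S z -> differentiable f z) ->
  (forall y z, S y -> S z ->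
     enorm (gradient f y - gradient f z) <= L * enorm (y - z)) ->
  0 < C -> L * diam S ^+ 2 <= C -> gradsup f S * diam S <= C ->
  0 <= delta ->
  (forall z, S z -> forall w, S w ->
     `| dotp (gradient f z - g z) (w - z) | <= delta) ->
  S (x 0%N) ->
  (forall k, S (s k) /\
     forall w, S w -> dotp (g (x k)) (s k - x k) <= dotp (g (x k)) (w - x k)) ->
  (forall k, x k.+1 = x k +
     (pos_part (dotp (g (x k)) (x k - s k) - delta) / C) *: (s k - x k)) ->
  forall k, f (x k.+1) <=
     f (x k) - pos_part (dotp (g (x k)) (x k - s k) - delta) ^+ 2 / (2 * C).
Proof.
move=> [p0 Sp0] cpt cvx dS Lip C0 hLD hGD d0 hg Sx0 hs hx.
have [M [M0 HM]] := cbound cpt.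
set B := d%:R * M.
have B0 : 0 <= B by rewrite mulr_ge0.
have HB : forall z, S z -> enorm z <= B.
  by move=> z Sz; apply: le_trans (enorm_mx z) _; apply: ler_wpM2l => //; apply: HM.
have HD : forall y z, S y -> S z -> enorm (y - z) <= B + B.
  move=> y z Sy Sz; apply: le_trans (enormD _ _) _; rewrite enormN.
  by apply: lerD; apply: HB.
have supD : has_sup [set r | exists x y, S x /\ S y /\ r = enorm (x - y)].
  split; first by exists (enorm (p0 - p0)), p0, p0.
  by exists (B + B) => r [y [z [Sy [Sz ->]]]]; apply: HD.
have Dub : forall y z, S y -> S z -> enorm (y - z) <= diam S.
  by move=> y z Sy Sz; apply: (sup_upper_bound supD); exists y, z.
have supG : has_sup [set r | exists x, S x /\ r = enorm (gradient f x)].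
  split; first by exists (enorm (gradient f p0)), p0.
  exists (enorm (gradient f p0) + `|L| * (B + B)) => r [z [Sz ->]].
  have -> : gradient f z = gradient f p0 + (gradient f z - gradient f p0).
    by rewrite addrC subrK.
  apply: le_trans (enormD _ _) _; apply: lerD => //.
  apply: le_trans (Lip _ _ Sz Sp0) _.
  apply: le_trans (ler_norm _) _; rewrite normrM (ger0_norm (enorm_ge0 _)).
  by apply: ler_wpM2l => //; apply: HD.
have Gub : forall z, S z -> enorm (gradient f z) <= gradsup f S.
  by move=> z Sz; apply: (sup_upper_bound supG); exists z.
have D0 : 0 <= diam S by apply: le_trans (Dub _ _ Sp0 Sp0); apply: enorm_ge0.
have step : forall k, S (x k) -> S (x k.+1) /\ f (x k.+1) <=
     f (x k) - pos_part (dotp (g (x k)) (x k - s k) - delta) ^+ 2 / (2 * C).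
  move=> k Sxk; have [Ssk _] := hs k.
  rewrite hx.
  set xk := x k in Sxk *. set sk := s k in Ssk *.
  set gt := dotp (g xk) (xk - sk).
  set a := pos_part (gt - delta).
  have [a0 [ha2 haC]] := pp_facts (gt - delta) C.
  have he := hg xk Sxk sk Ssk; rewrite ler_norml in he; case/andP: he => he1 he2.
  set e := dotp (gradient f xk - g xk) (sk - xk) in he1 he2.
  set P := dotp (gradient f xk) (sk - xk).
  have hP : P = - gt + e.
    rewrite /e dotpBl /gt -(opprB sk xk) dotpNr opprK -/P.
    by rewrite addrC subrK.
  have hGD' : - P <= gradsup f S * diam S.
    rewrite /P -dotpNr opprB.
    apply: le_trans (cauchy_schwarz _ _) _.
    apply: ler_pM; [exact: enorm_ge0 | exact: enorm_ge0 | exact: Gub | exact: Dub].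
  have gtC : gt - delta <= C.
    move: hP he2 hGD' hGD; set G := gradsup f S * diam S; clearbody G a; lra.
  have aC := haC gtC (ltW C0).
  set al := a / C.
  have al0 : 0 <= al by rewrite /al divr_ge0 // ltW.
  have al1 : al <= 1 by rewrite /al ler_pdivrMr // mul1r.
  have Sn : S (xk + al *: (sk - xk)) := cvx xk sk al Sxk Ssk al0 al1.
  split => //.
  have hd := descent cvx Sxk Sn dS Lip.
  have ee : xk + al *: (sk - xk) - xk = al *: (sk - xk) by rewrite addrAC subrr add0r.
  rewrite ee dotpZr enormZ ger0_norm // -/P in hd.
  have ED := Dub sk xk Ssk Sxk.
  have E0 := enorm_ge0 (sk - xk).
  set E := enorm (sk - xk) in ED E0 hd.
  set D := diam S in ED hLD D0.
  have LE : L * E ^+ 2 <= C.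
    have [L0|L0] := leP 0 L.
      apply: le_trans hLD; apply: ler_wpM2l => //.
      by rewrite lerXn2r // nnegrE.
    apply: le_trans (ltW C0); apply: mulr_le0_ge0; [exact: ltW | exact: sqr_ge0].
  have T1 : al * P <= - a ^+ 2 / C.
    have : P <= delta - gt by lra.
    move/(ler_wpM2l al0) => h; apply: le_trans h _.
    rewrite -ha2 /al; rewrite le_eqVlt; apply/orP; left; apply/eqP; rewrite -/a; clearbody a gt; field; exact/lt0r_neq0.
  have T2 : L / 2 * (al * E) ^+ 2 <= a ^+ 2 / (2 * C).
    have -> : L / 2 * (al * E) ^+ 2 = (al ^+ 2 / 2) * (L * E ^+ 2).
      by rewrite exprMn; field.
    apply: le_trans (ler_wpM2l _ LE) _; first by rewrite divr_ge0 // sqr_ge0.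
    rewrite /al; rewrite le_eqVlt; apply/orP; left; apply/eqP; field; exact/lt0r_neq0.
  have T3 : - a ^+ 2 / C + a ^+ 2 / (2 * C) = - a ^+ 2 / (2 * C).
    field; exact/lt0r_neq0.
  move: hd T1 T2 T3.
  set u := f _; set w := f xk; set q1 := al * P; set q2 := L / 2 * _; set q3 := - a ^+ 2 / C;
  set q4 := a ^+ 2 / (2 * C); set q5 := - a ^+ 2 / (2 * C).
  rewrite -mulNr -/q5.
  clearbody u w q1 q2 q3 q4 q5; lra.
have Sall : forall k, S (x k) by elim=> // k IH; exact: (step k IH).1.
by move=> k; exact: (step k (Sall k)).2.
Qed.
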